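(* Let $\pi:P\to M$ be a principal fibre bundle with group $G=P^{-1}P$, in the setting described in the context. For a connection $\nabla$ in the groupoid $PP^{-1}$, define its connection form $\omega$ by $\omega(u,v):=u^{-1}\big(\nabla(\pi(u),\pi(v))\cdot v\big)\in G$ for neighbours $u\sim v$ in $P$; equivalently $u\cdot\omega(u,v)=\nabla(\pi(u),\pi(v))\cdot v$. Then the assignment $\nabla\mapsto\omega$ is a bijection between the set of connections $\nabla$ in $PP^{-1}$ and the set of $G$-valued 1-forms $\omega$ on $P$ satisfying the two conditions (i) $\omega(xg,y)=g^{-1}\omega(x,y)$ whenever $x\sim y$ in $P$ and $g\in G$ is such that also $xg\sim y$; (ii) $\omega(xg,yg)=g^{-1}\omega(x,y)g$ for all $x\sim y$ in $P$ and all $g\in G$.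
   Context: Setting (all calculations may be done as in sets, the paper works internally in a left exact category). Let $\Phi$ be a groupoid whose object set contains a set $M$ and an object $*\notin M$. Let $P$ be the set of arrows of $\Phi$ with domain $*$ and codomain in $M$, and $\pi:P\to M$ the codomain map. The group $G=P^{-1}P:=\Phi( *,* )$ acts on $P$ from the right by precomposition ($x\cdot g=xg$); this action is free and transitive on each fibre $\pi^{-1}(a)$. For $x,z$ in the same fibre, $x^{-1}z\in G$ is the composite in $\Phi$. $PP^{-1}$ denotes the full subgroupoid of $\Phi$ on the objects $M$; its arrows $a\to b$ are the composites $yx^{-1}$ with $\pi(x)=a,\pi(y)=b$, and it acts on $P$ from the left by postcomposition. Composition is written right to left. Both $M$ and $P$ carry a reflexive symmetric ''neighbour'' relation $\sim$; $\pi$ preserves $\sim$; an infinitesimal $k$-simplex is a $(k+1)$-tuple of mutual neighbours; for every infinitesimal $k$-simplex $(a_0,\dots,a_k)$ in $M$ and every $x_0\in\pi^{-1}(a_0)$ there is an infinitesimal $k$-simplex $(x_0,\dots,x_k)$ in $P$ with $\pi(x_i)=a_i$; and the right action of each $g\in G$ preserves $\sim$ on $P$. A connection in $PP^{-1}$ is a map assigning to each pair $a\sim b$ in $M$ an arrow $\nabla(a,b)$ of $PP^{-1}$ from $b$ to $a$, with $\nabla(a,a)=\mathrm{id}_a$ and $\nabla(b,a)=\nabla(a,b)^{-1}$ (a morphism of reflexive symmetric graphs from the neighbour relation on $M$ to $PP^{-1}$). A $G$-valued 1-form on $P$ is a map $\omega$ assigning to each pair $x\sim y$ in $P$ an element $\omega(x,y)\in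 G$, with $\omega(x,x)=e$ and $\omega(y,x)=\omega(x,y)^{-1}$. *)

(* Defs.v *)
(* Groupoids are presented "as in sets": a set of objects,
   a set of arrows, domain/codomain maps, identities, a (total, but only
   meaningful on composable pairs) composition and inverses.
   Composition is written right to left: comp g f = g o f, defined when
   dom g = cod f. *)
From Stdlib Require Import Arith.

Record groupoid := Groupoid {
  Ob : Type;
  Ar : Type;
  dom : Ar -> Ob;
  cod : Ar -> Ob;
  idn : Ob -> Ar;
  comp : Ar -> Ar -> Ar;
  inv : Ar -> Ar;
  dom_idn : forall a, dom (idn a) = a;
  cod_idn : forall a, cod (idn a) = a;
  dom_comp : forall g f, dom g = cod f -> dom (comp g f) = dom f;
  cod_comp : forall g f, dom g = cod f -> cod (comp g f) = cod g;
  comp_assoc : forall h g f, dom h = cod g -> dom g = cod f ->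
      comp h (comp g f) = comp (comp h g) f;
  comp_idn_l : forall f, comp (idn (cod f)) f = f;
  comp_idn_r : forall f, comp f (idn (dom f)) = f;
  dom_inv : forall f, dom (inv f) = cod f;
  cod_inv : forall f, cod (inv f) = dom f;
  comp_inv_l : forall f, comp (inv f) f = idn (dom f);
  comp_inv_r : forall f, comp f (inv f) = idn (cod f)
}.

Arguments dom {_}. Arguments cod {_}. Arguments idn {_}.
Arguments comp {_}. Arguments inv {_}.

Section Bundle.
Variable Phi : groupoid.
Variable M : Ob Phi -> Prop.
Variable star : Ob Phi.

(* P = arrows star -> a with a in M; pi = cod *)
Definition inP (x : Ar Phi) : Prop := dom x = star /\ M (cod x).
Definition inG (g : Ar Phi) : Prop := dom g = star /\ cod g = star.

Variable nbM : Ob Phi -> Ob Phi -> Prop.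
Variable nbP : Ar Phi -> Ar Phi -> Prop.

(* a connection in PP^{-1}: for a ~ b in M, an arrow b -> a of the full
   subgroupoid on M, reflexive-symmetric-graph morphism *)
Definition is_connection (nabla : Ob Phi -> Ob Phi -> Ar Phi) : Prop :=
  (forall a b, M a -> M b -> nbM a b ->
     dom (nabla a b) = b /\ cod (nabla a b) = a) /\
  (forall a, M a -> nabla a a = idn a) /\
  (forall a b, M a -> M b -> nbM a b -> nabla b a = inv (nabla a b)).

Definition is_G_one_form (omega : Ar Phi -> Ar Phi -> Ar Phi) : Prop :=
  (forall x y, inP x -> inP y -> nbP x y -> inG (omega x y)) /\
  (forall x, inP x -> omega x x = idn star) /\
  (forall x y, inP x -> inP y -> nbP x y -> omega y x = inv (omega x y)).

Definition cond_i (omega : Ar Phi -> Ar Phi -> Ar Phi) : Prop :=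
  forall x y g, inP x -> inP y -> inG g -> nbP x y -> nbP (comp x g) y ->
    omega (comp x g) y = comp (inv g) (omega x y).

Definition cond_ii (omega : Ar Phi -> Ar Phi -> Ar Phi) : Prop :=
  forall x y g, inP x -> inP y -> inG g -> nbP x y ->
    omega (comp x g) (comp y g) = comp (comp (inv g) (omega x y)) g.

Definition conn_form (nabla : Ob Phi -> Ob Phi -> Ar Phi)
  (u v : Ar Phi) : Ar Phi :=
  comp (inv u) (comp (nabla (cod u) (cod v)) v).

Definition bundle_setting : Prop :=
  ~ M star /\
  (forall a, M a -> exists x, inP x /\ cod x = a) /\
  (forall a, M a -> nbM a a) /\
  (forall a b, M a -> M b -> nbM a b -> nbM b a) /\
  (forall x, inP x -> nbP x x) /\
  (forall x y, inP x -> inP y -> nbP x y -> nbP y x) /\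
  (forall x y, inP x -> inP y -> nbP x y -> nbM (cod x) (cod y)) /\
  (* lifting of infinitesimal k-simplices *)
  (forall (k : nat) (a : nat -> Ob Phi) (x0 : Ar Phi),
     (forall i, i <= k -> M (a i)) ->
     (forall i j, i <= k -> j <= k -> nbM (a i) (a j)) ->
     inP x0 -> cod x0 = a 0 ->
     exists x : nat -> Ar Phi,
       x 0 = x0 /\
       (forall i, i <= k -> inP (x i) /\ cod (x i) = a i) /\
       (forall i j, i <= k -> j <= k -> nbP (x i) (x j))) /\
  (forall x y g, inP x -> inP y -> inG g -> nbP x y ->
     nbP (comp x g) (comp y g)).

End Bundle.

(* Main.v *)
Require Import Defs.
From Stdlib Require Import ClassicalEpsilon.

Ltac dcs := repeat (first [ rewrite dom_idn | rewrite cod_idn | rewrite dom_inv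
  | rewrite cod_inv | rewrite dom_comp by dcs | rewrite cod_comp by dcs ]); try congruence.

Section G.
Variable Phi : groupoid.
Implicit Types f g h : Ar Phi.

Lemma comp_idn_l' f a : cod f = a -> comp (idn a) f = f.
Proof. intros <-; apply comp_idn_l. Qed.
Lemma comp_idn_r' f a : dom f = a -> comp f (idn a) = f.
Proof. intros <-; apply comp_idn_r. Qed.

Lemma inv_unique h f : dom h = cod f -> comp h f = idn (dom f) -> h = inv f.
Proof.
  intros H1 H2.
  rewrite <- (comp_idn_r' h (cod f)) by exact H1.
  rewrite <- (comp_inv_r _ f), comp_assoc by dcs.
  rewrite H2. apply comp_idn_l'. dcs.
Qed.

Lemma inv_inv f : inv (inv f) = f.
Proof.
  symmetry; apply inv_unique; dcs. apply comp_inv_r.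
Qed.

Lemma C1 f h : cod h = dom f -> comp (inv f) (comp f h) = h.
Proof. intros H. rewrite comp_assoc by dcs. rewrite comp_inv_l. apply comp_idn_l'. auto. Qed.
Lemma C2 f h : cod h = cod f -> comp f (comp (inv f) h) = h.
Proof. intros H. rewrite comp_assoc by dcs. rewrite comp_inv_r. apply comp_idn_l'. auto. Qed.

Lemma inv_comp g f : dom g = cod f -> inv (comp g f) = comp (inv f) (inv g).
Proof.
  intros H. symmetry; apply inv_unique; dcs.
  rewrite <- comp_assoc by dcs. rewrite (C1 g f) by dcs. rewrite comp_inv_l. dcs.
Qed.
End G.

Ltac norm := repeat (first [ rewrite <- comp_assoc by dcs | rewrite C1 by dcs
  | rewrite C2 by dcs | rewrite inv_comp by dcs | rewrite inv_inv
  | rewrite comp_inv_l | rewrite comp_inv_r | rewrite comp_idn_l' by dcs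
  | rewrite comp_idn_r' by dcs ]).

Theorem proposition1 (Phi : groupoid) (M : Ob Phi -> Prop) (star : Ob Phi)
  (nbM : Ob Phi -> Ob Phi -> Prop) (nbP : Ar Phi -> Ar Phi -> Prop) :
  bundle_setting Phi M star nbM nbP ->
  (* the assignment nabla |-> omega lands in the 1-forms satisfying (i),(ii) *)
  (forall nabla, is_connection Phi M nbM nabla ->
     is_G_one_form Phi M star nbP (conn_form Phi nabla) /\
     cond_i Phi M star nbP (conn_form Phi nabla) /\
     cond_ii Phi M star nbP (conn_form Phi nabla)) /\
  (* it is injective *)
  (forall nabla1 nabla2,
     is_connection Phi M nbM nabla1 -> is_connection Phi M nbM nabla2 ->
     (forall u v, inP Phi M star u -> inP Phi M star v -> nbP u v ->
        conn_form Phi nabla1 u v = conn_form Phi nabla2 u v) ->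
     forall a b, M a -> M b -> nbM a b -> nabla1 a b = nabla2 a b) /\
  (* it is surjective *)
  (forall omega,
     is_G_one_form Phi M star nbP omega ->
     cond_i Phi M star nbP omega -> cond_ii Phi M star nbP omega ->
     exists nabla, is_connection Phi M nbM nabla /\
       forall u v, inP Phi M star u -> inP Phi M star v -> nbP u v ->
         conn_form Phi nabla u v = omega u v).
Proof.
  intros [nMs [surj [reflM [symM [reflP [symP [piP [lift actP]]]]]]]].
  assert (lift1 : forall a b, M a -> M b -> nbM a b -> exists x y,
     inP Phi M star x /\ inP Phi M star y /\ cod x = a /\ cod y = b /\ nbP x y).
  { intros a b Ma Mb nab. destruct (surj a Ma) as [x [Px cx]].
    destruct (lift 1 (fun i => match i with 0 => a | _ => b end) x) as [X [X0 [HX HXn]]].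
    - intros [|i] _; simpl; auto.
    - intros [|i] [|j] _ _; simpl; auto.
    - exact Px.
    - exact cx.
    - exists (X 0), (X 1).
      destruct (HX 0) as [P0 c0]; [auto|]. destruct (HX 1) as [P1 c1]; [auto|].
      refine (conj P0 (conj P1 (conj c0 (conj c1 _)))). apply HXn; repeat constructor. }
  split; [|split].
  - intros nabla [Nd [Ni Ns]].
    assert (ND : forall x y, inP Phi M star x -> inP Phi M star y -> nbP x y ->
       dom (nabla (cod x) (cod y)) = cod y /\ cod (nabla (cod x) (cod y)) = cod x).
    { intros x y Px Py n. pose proof Px as [? ?]; pose proof Py as [? ?]. apply Nd; auto. }
    split; [split; [|split]|split].
    + intros x y Px Py nxy. destruct (ND x y Px Py nxy).
      destruct Px, Py. unfold inG, conn_form; split; dcs.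
    + intros x [dx Mx]. unfold conn_form. rewrite Ni by auto. norm. congruence.
    + intros x y Px Py nxy. destruct (ND x y Px Py nxy).
      pose proof Px as [? ?]; pose proof Py as [? ?].
      unfold conn_form. rewrite Ns by auto. norm. reflexivity.
    + intros x y g Px Py [dg cg] nxy _. destruct (ND x y Px Py nxy).
      destruct Px, Py. unfold conn_form. rewrite (cod_comp _ x g) by dcs.
      norm. reflexivity.
    + intros x y g Px Py [dg cg] nxy. destruct (ND x y Px Py nxy).
      destruct Px, Py. unfold conn_form. rewrite (cod_comp _ x g) by dcs.
      rewrite (cod_comp _ y g) by dcs. norm. reflexivity.
  - intros n1 n2 [N1d _] [N2d _] E a b Ma Mb nab.
    destruct (lift1 a b Ma Mb nab) as [x [y [Px [Py [cx [cy nxy]]]]]].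
    assert (Ex := E x y Px Py nxy). unfold conn_form in Ex. rewrite cx, cy in Ex.
    destruct Px, Py.
    assert (HN : forall N, dom N = b -> cod N = a ->
       N = comp (comp x (comp (inv x) (comp N y))) (inv y)).
    { intros N dN cN. norm. reflexivity. }
    destruct (N1d a b Ma Mb nab), (N2d a b Ma Mb nab).
    rewrite (HN (n1 a b)), Ex, <- HN by auto. reflexivity.
  - intros omega [Og [Oid Osym]] Oi Oii.
    set (lifts := fun a b (p : Ar Phi * Ar Phi) =>
      inP Phi M star (fst p) /\ inP Phi M star (snd p) /\ cod (fst p) = a /\
      cod (snd p) = b /\ nbP (fst p) (snd p)).
    set (val := fun (p : Ar Phi * Ar Phi) =>
      comp (fst p) (comp (omega (fst p) (snd p)) (inv (snd p)))).
    assert (WDg : forall x y g h, inP Phi M star x -> inP Phi M star y ->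
       inG Phi star g -> inG Phi star h -> nbP x y -> nbP (comp x g) (comp y h) ->
       val (comp x g, comp y h) = val (x, y)).
    { intros x y g h Px Py Gg Gh nxy nxgyh. unfold val; simpl.
      pose proof Gg as [dg cg]; pose proof Gh as [dh ch].
      pose proof Px as [dx Mx]; pose proof Py as [dy My].
      destruct (Og x y Px Py nxy) as [dW cW].
      assert (Pxg : inP Phi M star (comp x g)) by (split; dcs).
      assert (Pyg : inP Phi M star (comp y g)) by (split; dcs).
      assert (Pyh : inP Phi M star (comp y h)) by (split; dcs).
      assert (Gk : inG Phi star (comp (inv g) h)) by (split; dcs).
      assert (E1 : comp y h = comp (comp y g) (comp (inv g) h)) by (norm; reflexivity).
      rewrite <- (inv_inv _ (omega (comp x g) (comp y h))).
      rewrite <- Osym by auto.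
      rewrite E1 at 1.
      rewrite Oi by (auto; rewrite <- E1; auto).
      rewrite <- (inv_inv _ (omega (comp y g) (comp x g))).
      rewrite <- Osym by auto.
      rewrite Oii by auto.
      norm. reflexivity. }
    assert (WD : forall a b p q, lifts a b p -> lifts a b q -> val p = val q).
    { intros a b [x y] [x' y'] [Px [Py [cx [cy nxy]]]] [Px' [Py' [cx' [cy' nxy']]]].
      simpl in *.
      pose proof Px as [dx Mx]; pose proof Py as [dy My].
      pose proof Px' as [dx' Mx']; pose proof Py' as [dy' My'].
      assert (Ex : x' = comp x (comp (inv x) x')) by (norm; reflexivity).
      assert (Ey : y' = comp y (comp (inv y) y')) by (norm; reflexivity).
      rewrite Ex, Ey. symmetry. apply WDg; auto; try (split; dcs).
      rewrite <- Ex, <- Ey; auto. }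
    set (nabla := fun a b => val (epsilon (inhabits (idn star, idn star)) (lifts a b))).
    assert (Nspec : forall a b p, lifts a b p -> nabla a b = val p).
    { intros a b p Hp. unfold nabla. apply (WD a b); auto.
      apply epsilon_spec. exists p; exact Hp. }
    exists nabla. split; [split; [|split]|].
    + intros a b Ma Mb nab.
      destruct (lift1 a b Ma Mb nab) as [x [y [Px [Py [cx [cy nxy]]]]]].
      rewrite (Nspec a b (x, y)) by (unfold lifts; simpl; repeat (match goal with |- _ /\ _ => split end); auto).
      destruct (Og x y Px Py nxy). destruct Px, Py.
      unfold val; simpl. split; dcs.
    + intros a Ma. destruct (surj a Ma) as [x [Px cx]].
      rewrite (Nspec a a (x, x)) by (unfold lifts; simpl; repeat (match goal with |- _ /\ _ => split end); auto).
      unfold val; simpl. rewrite Oid by auto. destruct Px. norm. congruence.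
    + intros a b Ma Mb nab.
      destruct (lift1 a b Ma Mb nab) as [x [y [Px [Py [cx [cy nxy]]]]]].
      rewrite (Nspec a b (x, y)) by (unfold lifts; simpl; repeat (match goal with |- _ /\ _ => split end); auto).
      rewrite (Nspec b a (y, x)) by (unfold lifts; simpl; repeat (match goal with |- _ /\ _ => split end); auto).
      unfold val; simpl. rewrite Osym by auto.
      destruct (Og x y Px Py nxy). destruct Px, Py. norm. reflexivity.
    + intros u v Pu Pv nuv. unfold conn_form.
      rewrite (Nspec _ _ (u, v)) by (unfold lifts; simpl; repeat (match goal with |- _ /\ _ => split end); auto).
      unfold val; simpl.
      destruct (Og u v Pu Pv nuv). destruct Pu, Pv. norm. reflexivity.
Qed.
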